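(* Assume Assumption 1 and Assumption 2 with $\delta>1/10$. For any distinct $u,u_1,u_2\in L$, as $n_R\to\infty$, $$\Pr[(u,u_1),(u,u_2),(u_1,u_2)\in E\mid S_L,S_R]=p_{uu_1}p_{uu_2}\cdot\frac{M_{R1}M_{R3}}{M_{R2}^2}\cdot\frac1{w_u}\,(1+o(1))+o(p_{uu_1}p_{uu_2}),$$ where $p_{xy}=\frac{M_{R2}}{M_{R1}^2}\cdot\frac{w_xw_y}{n_R}$.
   Context: Model: left nodes $L$ ($|L|=n_L$), right nodes $R$ ($|R|=n_R$), weight sequences $S_L=(w_u)_{u\in L}$, $S_R=(w_v)_{v\in R}$ of positive reals; $M_{Lk}=\frac1{n_L}\sum_{u\in L}w_u^k$, $M_{Rk}=\frac1{n_R}\sum_{v\in R}w_v^k$. The random bipartite graph $G_b=(L\sqcup R,E_b)$ contains each edge $(u,v)$, $u\in L$, $v\in R$, independently with probability $\min\left(\frac{w_uw_v}{n_RM_{R1}},1\right)$. The projected graph is $G=(L,E)$ with $(u,u')\in E$ for distinct $u,u'\in L$ iff there is $z\in R$ with $(u,z),(u',z)\in E_b$. Assumption 1: $\frac{w_uw_v}{n_RM_{R1}}\le1$ for all $u\in L,v\in R$. Assumption 2 (parameter $\delta>0$), as $n_L,n_R\to\infty$: $\max(S_L\cup S_R)=O(n_R^{1/2-\delta})$, $\min S_L=\Omega(1)$, $M_{R2}=O(M_{R1}^2)$, $M_{R4}=O(n_R^{1-2\delta})$. *)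

(* Defs.v *)
From HB Require Import structures.
From mathcomp Require Import all_boot all_order all_algebra.
From mathcomp Require Import all_classical all_reals all_analysis.
Set Implicit Arguments. Unset Strict Implicit. Unset Printing Implicit Defensive.
Import Order.TTheory GRing.Theory Num.Theory.
Import numFieldNormedType.Exports.
Local Open Scope ring_scope.

Section Model.
Variable R : realType.

Definition moment (n : nat) (w : 'I_n -> R) (j : nat) : R :=
  n%:R^-1 * \sum_(i < n) w i ^+ j.

Variables (nL nR : nat) (wL : 'I_nL -> R) (wR : 'I_nR -> R).

Definition edge_prob (e : 'I_nL * 'I_nR) : R :=
  Num.min (wL e.1 * wR e.2 / (nR%:R * moment wR 1)) 1.

Definition bip_weight (Eb : {set 'I_nL * 'I_nR}) : R :=
  \prod_(e : 'I_nL * 'I_nR)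
     (if e \in Eb then edge_prob e else 1 - edge_prob e).

Definition proj_adj (Eb : {set 'I_nL * 'I_nR}) (x y : 'I_nL) : bool :=
  (x != y) && [exists z : 'I_nR, ((x, z) \in Eb) && ((y, z) \in Eb)].

Definition triangle_prob (u u1 u2 : 'I_nL) : R :=
  \sum_(Eb : {set 'I_nL * 'I_nR} |
          [&& proj_adj Eb u u1, proj_adj Eb u u2 & proj_adj Eb u1 u2])
     bip_weight Eb.

Definition pxy (x y : 'I_nL) : R :=
  moment wR 2 / moment wR 1 ^+ 2 * (wL x * wL y / nR%:R).

End Model.

(* Main.v *)
Require Import Defs.
From HB Require Import structures.
From mathcomp Require Import all_boot all_order all_algebra.
From mathcomp Require Import all_classical all_reals all_analysis.
From mathcomp Require Import ring lra.
Import Order.TTheory GRing.Theory Num.Theory.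
Import numFieldNormedType.Exports.
Local Open Scope ring_scope.


Section Prob.
Local Set Implicit Arguments. Local Unset Strict Implicit.
Variables (R : realType) (T : finType) (p : T -> R).
Definition W (A : {set T}) : R := \prod_e (if e \in A then p e else 1 - p e).

Lemma sum_sets (F : {set T} -> R) :
  \sum_(A : {set T}) F A = \sum_(f : {ffun T -> bool}) F [set x | f x].
Proof.
rewrite (reindex (fun f : {ffun T -> bool} => [set x | f x])) //.
apply: onW_bij; exists (fun A : {set T} => [ffun x => x \in A]).
  by move=> f; apply/ffunP => x; rewrite ffunE inE.
by move=> A; apply/setP => x; rewrite inE ffunE.
Qed.

Lemma indE (A : {set T}) s :
  \prod_(e <- s) ((e \in A)%:R : R) = (all (fun e => e \in A) s)%:R.
Proof.
elim: s => [|e s IH]; first by rewrite big_nil.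
by rewrite big_cons IH /=; case: (e \in A); rewrite ?mul1r ?mul0r.
Qed.

Lemma key s : uniq s ->
  \sum_(A : {set T}) W A * \prod_(e <- s) ((e \in A)%:R : R) = \prod_(e <- s) p e.
Proof.
move=> us.
have -> : \prod_(e <- s) p e = \prod_e (if e \in s then p e else 1).
  by rewrite big_uniq // big_mkcond.
rewrite sum_sets.
transitivity (\sum_(f : {ffun T -> bool}) \prod_e
   ((if f e then p e else 1 - p e) * (if e \in s then (f e)%:R else 1))).
  apply: eq_bigr => f _; rewrite /W big_split /=; congr (_ * _).
    by apply: eq_bigr => e _; rewrite inE.
  by rewrite big_uniq // big_mkcond; apply: eq_bigr => e _; rewrite inE.
rewrite -(bigA_distr_bigA (fun e b => (if b then p e else 1 - p e) *
   (if e \in s then (b%:R : R) else 1))).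
apply: eq_bigr => e _; rewrite big_bool /=.
by case: (e \in s); rewrite ?mulr1 ?mulr0 ?addr0 // subrKC.
Qed.
End Prob.


Section PerK.
Variables (R : realType) (nL nR : nat) (wL : 'I_nL -> R) (wR : 'I_nR -> R).
Variables (u u1 u2 : 'I_nL).
Hypothesis wLpos : forall i, 0 < wL i.
Hypothesis wRpos : forall j, 0 < wR j.
Hypothesis A1 : forall i j, wL i * wR j / (nR%:R * moment wR 1) <= 1.
Hypothesis d01 : u != u1.
Hypothesis d02 : u != u2.
Hypothesis d12 : u1 != u2.

Let a (x : 'I_nL) (z : 'I_nR) : R := wL x * wR z / (nR%:R * moment wR 1).

Lemma a_ge0 x z : 0 <= a x z.
Proof.
rewrite /a /moment; apply: divr_ge0; first by apply: mulr_ge0; apply: ltW.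
apply: mulr_ge0 => //; apply: mulr_ge0 => //; apply: sumr_ge0 => i _.
by rewrite expr1 ltW.
Qed.

Lemma epE x z : edge_prob wL wR (x, z) = a x z.
Proof. by rewrite /edge_prob /= min_l ?A1. Qed.

Lemma ep01 e : 0 <= edge_prob wL wR e <= 1.
Proof. by case: e => x z; rewrite epE a_ge0 A1. Qed.

Lemma W_ge0 (A : {set 'I_nL * 'I_nR}) : 0 <= W (edge_prob wL wR) A.
Proof.
rewrite /W; apply: prodr_ge0 => e _; have /andP[h1 h2] := ep01 e.
by case: (e \in A) => //; rewrite subr_ge0.
Qed.


Hypothesis npos : (0 < nR)%N.
Local Notation n := (nR%:R : R).
Local Notation M j := (moment wR j).

Lemma n_gt0 : 0 < n. Proof. by rewrite ltr0n. Qed.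

Lemma M_gt0 j : 0 < M j.
Proof.
rewrite /moment; apply: mulr_gt0; first by rewrite invr_gt0 n_gt0.
have z0 : 'I_nR := Ordinal npos.
rewrite (bigD1 z0) //=; apply: ltr_wpDr; last by rewrite exprn_gt0.
by apply: sumr_ge0 => i _; rewrite exprn_ge0 // ltW.
Qed.

Ltac side := rewrite ?(gt_eqF (M_gt0 _)) ?(gt_eqF n_gt0) ?(gt_eqF (wLpos _)) //.

Lemma sumwR j : \sum_(z < nR) wR z ^+ j = n * M j.
Proof. by rewrite /moment mulrA mulfV ?mul1r //; side. Qed.

Lemma sum_aa x y : \sum_z a x z * a y z = pxy wL wR x y.
Proof.
transitivity (wL x * wL y / (n * M 1) ^+ 2 * \sum_z wR z ^+ 2).
  rewrite mulr_sumr; apply: eq_bigr => z _; rewrite /a.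
  by field; side.
by rewrite sumwR /pxy; field; side.
Qed.

Let q z := a u z * a u1 z * a u2 z.

Lemma sum_q : \sum_z q z =
  pxy wL wR u u1 * pxy wL wR u u2 * (M 1 * M 3 / M 2 ^+ 2) * (wL u)^-1.
Proof.
transitivity (wL u * wL u1 * wL u2 / (n * M 1) ^+ 3 * \sum_z wR z ^+ 3).
  rewrite mulr_sumr; apply: eq_bigr => z _; rewrite /q /a.
  by field; side.
by rewrite sumwR /pxy; field; side.
Qed.

Lemma q_ge0 z : 0 <= q z.
Proof. by rewrite /q; apply: mulr_ge0; [apply: mulr_ge0|]; apply: a_ge0. Qed.

Lemma q_le z : q z <= a u1 z * a u2 z.
Proof.
rewrite /q -mulrA ler_piMl //; first by rewrite mulr_ge0 // a_ge0.
exact: A1.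
Qed.


Let s3 (z : 'I_nR) := [:: (u,z); (u1,z); (u2,z)].
Let s6 (z1 z2 z3 : 'I_nR) := [:: (u,z1);(u1,z1);(u,z2);(u2,z2);(u1,z3);(u2,z3)].
Let X (A : {set 'I_nL * 'I_nR}) z : R := \prod_(e <- s3 z) ((e \in A)%:R : R).
Let Y (A : {set 'I_nL * 'I_nR}) z1 z2 z3 : R :=
  \prod_(e <- s6 z1 z2 z3) ((e \in A)%:R : R).
Let dist (z1 z2 z3 : 'I_nR) := [&& z1 != z2, z1 != z3 & z2 != z3].
Let tri (A : {set 'I_nL * 'I_nR}) :=
  [&& proj_adj A u u1, proj_adj A u u2 & proj_adj A u1 u2].
Let Pr := W (edge_prob wL wR).

Let e01 : (u == u1) = false. Proof. exact: negbTE. Qed.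
Let e10 : (u1 == u) = false. Proof. by rewrite eq_sym e01. Qed.
Let e02 : (u == u2) = false. Proof. exact: negbTE. Qed.
Let e20 : (u2 == u) = false. Proof. by rewrite eq_sym e02. Qed.
Let e12 : (u1 == u2) = false. Proof. exact: negbTE. Qed.
Let e21 : (u2 == u1) = false. Proof. by rewrite eq_sym e12. Qed.

Lemma EX z : \sum_A Pr A * X A z = q z.
Proof.
rewrite /X key; last by rewrite /= !inE !xpair_eqE e01 e02 e12.
by rewrite !big_cons big_nil !epE mulr1 /q mulrA.
Qed.

Lemma EXX z z' : z != z' -> \sum_A Pr A * (X A z * X A z') = q z * q z'.
Proof.
move=> /negbTE hz; have hz' : (z' == z) = false by rewrite eq_sym.
under eq_bigr do rewrite /X -big_cat.
rewrite key; last by rewrite /= !inE !xpair_eqE ?e01 ?e02 ?e12 ?e10 ?e20 ?e21 ?hz ?hz' ?eqxx ?andbF ?andFb ?orbF.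
by rewrite !big_cons big_nil !epE mulr1 /q !mulrA.
Qed.

Lemma EY z1 z2 z3 : dist z1 z2 z3 -> \sum_A Pr A * Y A z1 z2 z3 =
  (a u z1 * a u1 z1) * (a u z2 * a u2 z2) * (a u1 z3 * a u2 z3).
Proof.
case/and3P => /negbTE h12 /negbTE h13 /negbTE h23.
have h21 : (z2 == z1) = false by rewrite eq_sym.
have h31 : (z3 == z1) = false by rewrite eq_sym.
have h32 : (z3 == z2) = false by rewrite eq_sym.
rewrite /Y key; last first.
  by rewrite /= !inE !xpair_eqE ?e01 ?e02 ?e12 ?e10 ?e20 ?e21 ?h12 ?h13 ?h23 ?h21 ?h31 ?h32 ?eqxx ?andbF ?andFb ?orbF.
by rewrite !big_cons big_nil !epE mulr1 !mulrA.
Qed.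


Lemma XE A z : X A z = ([&& (u,z) \in A, (u1,z) \in A & (u2,z) \in A])%:R.
Proof. by rewrite /X indE /= andbT. Qed.

Lemma X_ge0 A z : 0 <= X A z. Proof. by rewrite XE ler0n. Qed.

Lemma sum_ge_term (I : finType) (F : I -> R) i0 :
  (forall i, 0 <= F i) -> F i0 <= \sum_i F i.
Proof.
move=> h; rewrite (bigD1 i0) //= lerDl; exact: sumr_ge0.
Qed.

Lemma sum_ge_le (I : finType) (F : I -> R) i0 x :
  (forall i, 0 <= F i) -> x <= F i0 -> x <= \sum_i F i.
Proof. by move=> h hx; exact: le_trans hx (sum_ge_term _ _ i0 h). Qed.

Lemma lowerPW A :
  \sum_z X A z - \sum_z \sum_(z' | z' != z) X A z * X A z' <= (tri A)%:R.
Proof.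
set m := \sum_z X A z.
have hX z : X A z * X A z = X A z.
  by rewrite XE; case: (_ && _); rewrite ?mulr1 ?mulr0.
have -> : \sum_z \sum_(z' | z' != z) X A z * X A z' = m * m - m.
  transitivity (\sum_z (X A z * m - X A z)).
    apply: eq_bigr => z _; rewrite -mulr_sumr /m [in RHS](bigD1 z) //= mulrDr hX.
    ring.
  by rewrite sumrB -mulr_suml.
case E: [exists z, [&& (u,z) \in A, (u1,z) \in A & (u2,z) \in A]].
  have -> : tri A.
    case/existsP: E => z /and3P[h0 h1 h2].
    rewrite /tri /proj_adj d01 d02 d12 /=.
    by apply/and3P; split; apply/existsP; exists z; apply/andP; split.
  have : 0 <= (m - 1) ^+ 2 by apply: sqr_ge0.
  move=> h; rewrite /=; nra.
have m0 : m = 0.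
  rewrite /m big1 // => z _; rewrite XE.
  case H: (_ && _) => //; move/negbT/existsPn: E => /(_ z); by rewrite H.
by rewrite m0 !mulr0 !subr0 ler0n.
Qed.

Lemma Y_ge0 A z1 z2 z3 : 0 <= Y A z1 z2 z3.
Proof. by rewrite /Y indE ler0n. Qed.

Lemma upperPW A : (tri A)%:R <= \sum_z X A z +
  \sum_z1 \sum_z2 \sum_z3 (if dist z1 z2 z3 then Y A z1 z2 z3 else 0).
Proof.
have T0 : 0 <= \sum_z1 \sum_z2 \sum_z3 (if dist z1 z2 z3 then Y A z1 z2 z3 else 0).
  do 3! (apply: sumr_ge0 => ? _); case: ifP => _ //; exact: Y_ge0.
have S0 : 0 <= \sum_z X A z by apply: sumr_ge0 => z _; exact: X_ge0.
case E: [exists z, [&& (u,z) \in A, (u1,z) \in A & (u2,z) \in A]].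
  case/existsP: E => z hz.
  have : X A z <= \sum_z X A z by apply: sum_ge_term => ?; exact: X_ge0.
  rewrite XE hz => h; rewrite -[(tri A)%:R]addr0; apply: lerD => //.
  by apply: le_trans h; case: (tri A).
case H: (tri A); last by rewrite addr_ge0.
move: H; rewrite /tri /proj_adj => /and3P[/andP[_ /existsP[z1 /andP[a1 b1]]]
   /andP[_ /existsP[z2 /andP[a2 b2]]] /andP[_ /existsP[z3 /andP[a3 b3]]]].
have nE : forall z, ~ [&& (u,z) \in A, (u1,z) \in A & (u2,z) \in A].
  by move=> z hz; move: E; have -> // : [exists z, [&& (u,z) \in A, (u1,z) \in A & (u2,z) \in A]]; apply/existsP; exists z.
have hd : dist z1 z2 z3.
  apply/and3P; split; apply/eqP => ez; subst.
  - by apply: (nE z2); rewrite a1 b1 b2.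
  - by apply: (nE z3); rewrite a1 b1 b3.
  - by apply: (nE z3); rewrite a2 a3 b3.
rewrite -[1%:R]add0r; apply: lerD => //.
apply: (sum_ge_le _ _ z1).
  by move=> ?; do 2! (apply: sumr_ge0 => ? _); case: ifP => _ //; exact: Y_ge0.
apply: (sum_ge_le _ _ z2).
  by move=> ?; apply: sumr_ge0 => ? _; case: ifP => _ //; exact: Y_ge0.
apply: (sum_ge_le _ _ z3).
  by move=> ?; case: ifP => _ //; exact: Y_ge0.
by rewrite hd /Y indE /= a1 b1 a2 b2 a3 b3.
Qed.


Lemma T_eq : triangle_prob wL wR u u1 u2 = \sum_A Pr A * (tri A)%:R.
Proof.
rewrite /triangle_prob big_mkcond; apply: eq_bigr => A _; rewrite /tri.
by case: (_ && _); rewrite ?mulr1 ?mulr0.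
Qed.

Lemma Pr_ge0 A : 0 <= Pr A. Proof. exact: W_ge0. Qed.

Lemma swap1 (F : {set 'I_nL * 'I_nR} -> 'I_nR -> R) :
  \sum_A Pr A * \sum_z F A z = \sum_z \sum_A Pr A * F A z.
Proof. under eq_bigr do rewrite mulr_sumr; exact: exchange_big. Qed.

Let S := \sum_z q z.

Lemma T_lower : S - S ^+ 2 <= triangle_prob wL wR u u1 u2.
Proof.
rewrite T_eq.
apply: le_trans (ler_sum _ (fun A _ => ler_wpM2l (Pr_ge0 A) (lowerPW A))).
under eq_bigr do rewrite mulrBr.
rewrite sumrB swap1.
under eq_bigr do rewrite EX.
apply: lerB => //.
rewrite swap1.
under eq_bigr => z _ do under eq_bigr => A _ do rewrite mulr_sumr.
under eq_bigr => z _ do rewrite exchange_big /=.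
have -> : S ^+ 2 = \sum_z \sum_z' q z * q z'.
  by rewrite expr2 /S mulr_suml; apply: eq_bigr => z _; rewrite mulr_sumr.
apply: ler_sum => z _.
rewrite [leRHS](bigD1 z) //=.
have -> : \sum_(z' | z' != z) \sum_A Pr A * (X A z * X A z') =
          \sum_(z' | z' != z) q z * q z'.
  by apply: eq_bigr => z' hz; rewrite EXX // eq_sym.
by rewrite lerDr; apply: mulr_ge0; apply: q_ge0.
Qed.


Lemma T_upper : triangle_prob wL wR u u1 u2 <=
  S + pxy wL wR u u1 * pxy wL wR u u2 * pxy wL wR u1 u2.
Proof.
rewrite T_eq.
apply: le_trans (ler_sum _ (fun A _ => ler_wpM2l (Pr_ge0 A) (upperPW A))) _.
under eq_bigr do rewrite mulrDr.
rewrite big_split /= swap1.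
apply: lerD; first by under eq_bigr do rewrite EX.
rewrite swap1.
under eq_bigr => z1 _ do under eq_bigr => A _ do rewrite mulr_sumr.
under eq_bigr => z1 _ do rewrite exchange_big /=.
under eq_bigr => z1 _ do under eq_bigr => z2 _ do under eq_bigr => A _ do rewrite mulr_sumr.
under eq_bigr => z1 _ do under eq_bigr => z2 _ do rewrite exchange_big /=.
rewrite -!sum_aa -mulrA mulr_suml; apply: ler_sum => z1 _.
rewrite mulr_suml mulr_sumr; apply: ler_sum => z2 _.
rewrite mulrA mulr_sumr; apply: ler_sum => z3 _.
case hd: (dist z1 z2 z3).
  by rewrite EY // le_eqVlt; apply/orP; left; apply/eqP; ring.
rewrite big1 => [|A _]; last by rewrite mulr0.
by apply: mulr_ge0; [apply: mulr_ge0|]; apply: mulr_ge0; apply: a_ge0.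
Qed.


Lemma a_gt0 x z : 0 < a x z.
Proof. rewrite /a; apply: divr_gt0; apply: mulr_gt0 => //; [exact: n_gt0 | exact: M_gt0]. Qed.

Lemma pxy_gt0 x y : 0 < pxy wL wR x y.
Proof.
rewrite /pxy; apply: mulr_gt0; apply: divr_gt0.
- exact: M_gt0.
- exact: exprn_gt0 (M_gt0 _).
- exact: mulr_gt0.
- exact: n_gt0.
Qed.

Lemma S_gt0 : 0 < S.
Proof.
have z0 : 'I_nR := Ordinal npos.
rewrite /S (bigD1 z0) //=; apply: ltr_wpDr; first by apply: sumr_ge0 => z _; apply: q_ge0.
by rewrite /q; apply: mulr_gt0; [apply: mulr_gt0|]; apply: a_gt0.
Qed.

Lemma S_le : S <= pxy wL wR u1 u2.
Proof. by rewrite -sum_aa; apply: ler_sum => z _; apply: q_le. Qed.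

Lemma perk_pos : exists e1 e2 : R,
  `|e1| <= pxy wL wR u1 u2 /\ `|e2| <= pxy wL wR u1 u2 /\
  triangle_prob wL wR u u1 u2 =
    pxy wL wR u u1 * pxy wL wR u u2 * (M 1 * M 3 / M 2 ^+ 2) * (wL u)^-1 * (1 + e1)
    + e2 * (pxy wL wR u u1 * pxy wL wR u u2).
Proof.
rewrite -sum_q -/S.
set T := triangle_prob _ _ _ _ _.
set p12 := pxy _ _ u1 u2.
set P := pxy _ _ u u1 * pxy _ _ u u2.
have hS := S_gt0; have hSl := S_le; have hl := T_lower; have hu := T_upper.
rewrite -/T -/p12 -/S in hl hu hSl.
rewrite -/P in hu.
have hP : 0 < P by rewrite /P mulr_gt0 // pxy_gt0.
case: (lerP T S) => h.
  exists ((T - S) / S), 0; split; last split.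
  - have he : (T - S) / S * S = T - S by field; rewrite gt_eqF.
    rewrite ler_norml; apply/andP; split; nra.
  - by rewrite normr0 ltW // /p12 pxy_gt0.
  - field; by rewrite gt_eqF.
exists 0, ((T - S) / P); split; last split.
- by rewrite normr0 ltW // /p12 pxy_gt0.
- have he : (T - S) / P * P = T - S by field; rewrite gt_eqF.
  rewrite ler_norml; apply/andP; split; nra.
- field; by rewrite gt_eqF.
Qed.

End PerK.

Lemma perk (R : realType) (nL nR : nat) (wL : 'I_nL -> R) (wR : 'I_nR -> R)
  (u u1 u2 : 'I_nL) :
  (forall i, 0 < wL i) -> (forall j, 0 < wR j) ->
  (forall i j, wL i * wR j / (nR%:R * moment wR 1) <= 1) ->
  [/\ u != u1, u != u2 & u1 != u2] ->
  exists e1 e2 : R,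
  `|e1| <= pxy wL wR u1 u2 /\ `|e2| <= pxy wL wR u1 u2 /\
  triangle_prob wL wR u u1 u2 =
    pxy wL wR u u1 * pxy wL wR u u2 *
      (moment wR 1 * moment wR 3 / moment wR 2 ^+ 2) * (wL u)^-1 * (1 + e1)
    + e2 * (pxy wL wR u u1 * pxy wL wR u u2).
Proof.
move=> hL hR hA [d01 d02 d12].
have [n0|npos] := posnP nR; last exact: perk_pos.
subst nR.
have m0 j : moment wR j = 0 by rewrite /moment big_ord0 mulr0.
have p0 x y : pxy wL wR x y = 0 by rewrite /pxy m0 !mul0r.
exists 0, 0; rewrite !p0 normr0 !mul0r add0r; split => //; split => //.
rewrite /triangle_prob big1 // => A.
by rewrite /proj_adj; case/and3P => /andP[_ /existsP[[z hz]]].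
Qed.


Lemma small (R : realType) (delta : R) (nL nR : nat -> nat)
  (wL : forall k, 'I_(nL k) -> R) (wR : forall k, 'I_(nR k) -> R)
  (u1 u2 : forall k, 'I_(nL k)) :
  0 < delta -> (forall k i, 0 < wL k i) -> (forall k j, 0 < wR k j) ->
  (forall M : nat, exists N, forall k, (N <= k)%N -> (M <= nR k)%N) ->
  (exists C : R, 0 < C /\ exists N, forall k, (N <= k)%N ->
      (forall i, wL k i <= C * (nR k)%:R `^ (2^-1 - delta))) ->
  (exists C : R, 0 < C /\ exists N, forall k, (N <= k)%N ->
      moment (wR k) 2 <= C * moment (wR k) 1 ^+ 2) ->
  forall e : R, 0 < e -> exists N, forall k, (N <= k)%N ->
     pxy (wL k) (wR k) (u1 k) (u2 k) < e.
Proof.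
move=> hd hL hR hn [C [C0 [N1 HC]]] [C2 [C20 [N2 HC2]]] e e0.
pose K := C2 * C ^+ 2.
pose B := K / e.
pose b := B `^ (2 * delta)^-1.
have [N3 HN3] := hn (Num.truncn b).+1.
exists (maxn N1 (maxn N2 N3)) => k.
rewrite !geq_max => /and3P[k1 k2 k3].
have hnk := HN3 _ k3.
have npos : (0 < nR k)%N by apply: leq_trans hnk.
set n : R := (nR k)%:R.
have n0 : 0 < n by rewrite /n ltr0n.
have nb : b < n.
  apply: lt_le_trans (truncnS_gt b) _; by rewrite /n ler_nat.
have hM1 := M_gt0 _ _ _ (hR k) npos 1.
have hM2 := M_gt0 _ _ _ (hR k) npos 2.
set M1 := moment (wR k) 1 in hM1 *; set M2 := moment (wR k) 2 in hM2 *.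
have hB : 0 <= B.
  rewrite /B /K; apply: divr_ge0; last exact: ltW.
  by apply: mulr_ge0; [exact: ltW | apply: exprn_ge0; exact: ltW].
set a := 2^-1 - delta.
set na := n `^ a.
have na0 : 0 < na by rewrite /na powR_gt0.
have w1 := HC _ k1 (u1 k); have w2 := HC _ k1 (u2 k).
rewrite -/n -/a -/na in w1 w2.
have w10 := hL k (u1 k); have w20 := hL k (u2 k).
have hM := HC2 _ k2; rewrite -/M1 -/M2 in hM.
set m := n `^ (2 * delta).
have m0 : 0 < m by rewrite /m powR_gt0.
have mB : B < m.
  have -> : B = b `^ (2 * delta).
    rewrite /b -powRrM mulVf ?powRr1 //; by rewrite gt_eqF // mulr_gt0.
  apply: gt0_ltr_powR => //; first by rewrite mulr_gt0.
  - by rewrite nnegrE /b powR_ge0.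
  - by rewrite nnegrE ltW.
have hna : na * na / n = m^-1.
  rewrite /na /m -powRD; last by rewrite (gt_eqF n0) implybT.
  have -> : (n `^ (2 * delta))^-1 = n `^ (- (2 * delta)) by rewrite powRN.
  rewrite -{2}[n]powRr1 ?ltW // -powRB; last by rewrite (gt_eqF n0) implybT.
  by congr (_ `^ _); rewrite /a; field.
have hp : pxy (wL k) (wR k) (u1 k) (u2 k) <= K * m^-1.
  rewrite /pxy -/n -/M1 -/M2 -hna /K.
  have h1 : M2 / M1 ^+ 2 <= C2.
    by rewrite ler_pdivrMr ?exprn_gt0.
  have h2 : wL k (u1 k) * wL k (u2 k) <= C ^+ 2 * (na * na).
    by rewrite expr2 mulrACA; apply: ler_pM => //; apply: ltW.
  have h3 : wL k (u1 k) * wL k (u2 k) / n <= C ^+ 2 * (na * na) / n.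
    by apply: ler_wpM2r; [rewrite invr_ge0 ltW | exact: h2].
  apply: le_trans (ler_pM _ _ h1 h3) _.
  - by apply: divr_ge0; apply: ltW => //; apply: exprn_gt0.
  - by apply: divr_ge0; apply: ltW => //; apply: mulr_gt0.
  by rewrite le_eqVlt; apply/orP; left; apply/eqP; ring.
apply: le_lt_trans hp _.
rewrite /B ltr_pdivrMr // in mB.
by rewrite ltr_pdivrMr // mulrC.
Qed.

Local Open Scope classical_set_scope.


Theorem mainTheorem8 (R : realType) (delta : R) (nL nR : nat -> nat)
  (wL : forall k, 'I_(nL k) -> R) (wR : forall k, 'I_(nR k) -> R)
  (u u1 u2 : forall k, 'I_(nL k)) :
  (* delta > 1/10 *)
  10%:R^-1 < delta ->
  (* weights are positive reals *)
  (forall k i, 0 < wL k i) -> (forall k j, 0 < wR k j) ->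
  (* Assumption 1 *)
  (forall k i j, wL k i * wR k j / ((nR k)%:R * moment (wR k) 1) <= 1) ->
  (* Assumption 2: n_L, n_R -> oo *)
  (forall M : nat, exists N, forall k, (N <= k)%N -> (M <= nL k)%N /\ (M <= nR k)%N) ->
  (* max(S_L u S_R) = O(n_R^(1/2 - delta)) *)
  (exists C : R, 0 < C /\ exists N, forall k, (N <= k)%N ->
      (forall i, wL k i <= C * (nR k)%:R `^ (2^-1 - delta)) /\
      (forall j, wR k j <= C * (nR k)%:R `^ (2^-1 - delta))) ->
  (* min S_L = Omega(1) *)
  (exists c : R, 0 < c /\ exists N, forall k, (N <= k)%N -> forall i, c <= wL k i) ->
  (* M_R2 = O(M_R1^2) *)
  (exists C : R, 0 < C /\ exists N, forall k, (N <= k)%N ->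
      moment (wR k) 2 <= C * moment (wR k) 1 ^+ 2) ->
  (* M_R4 = O(n_R^(1 - 2 delta)) *)
  (exists C : R, 0 < C /\ exists N, forall k, (N <= k)%N ->
      moment (wR k) 4 <= C * (nR k)%:R `^ (1 - 2 * delta)) ->
  (* u, u1, u2 distinct *)
  (forall k, [/\ u k != u1 k, u k != u2 k & u1 k != u2 k]) ->
  exists eps eta : nat -> R,
    eps @ \oo --> (0 : R) /\ eta @ \oo --> (0 : R) /\
    forall k,
      triangle_prob (wL k) (wR k) (u k) (u1 k) (u2 k) =
        pxy (wL k) (wR k) (u k) (u1 k) * pxy (wL k) (wR k) (u k) (u2 k)
        * (moment (wR k) 1 * moment (wR k) 3 / moment (wR k) 2 ^+ 2)
        * (wL k (u k))^-1 * (1 + eps k)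
      + eta k * (pxy (wL k) (wR k) (u k) (u1 k) * pxy (wL k) (wR k) (u k) (u2 k)).
Proof.
move=> hd hL hR hA hn [C [C0 [N HC]]] _ hM2 _ hdist.
have hd0 : 0 < delta.
  by apply: lt_trans hd; rewrite invr_gt0 ltr0n.
have hn' : forall M : nat, exists N, forall k, (N <= k)%N -> (M <= nR k)%N.
  by move=> M; have [N' hN] := hn M; exists N' => k hk; case: (hN k hk).
have hC' : exists C : R, 0 < C /\ exists N, forall k, (N <= k)%N ->
      (forall i, wL k i <= C * (nR k)%:R `^ (2^-1 - delta)).
  by exists C; split => //; exists N => k hk; case: (HC k hk).
have Hs := @small _ _ _ _ wL wR u1 u2 hd0 hL hR hn' hC' hM2.
have H : forall k, exists ee : R * R,
  `|ee.1| <= pxy (wL k) (wR k) (u1 k) (u2 k) /\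
  `|ee.2| <= pxy (wL k) (wR k) (u1 k) (u2 k) /\
  triangle_prob (wL k) (wR k) (u k) (u1 k) (u2 k) =
        pxy (wL k) (wR k) (u k) (u1 k) * pxy (wL k) (wR k) (u k) (u2 k)
        * (moment (wR k) 1 * moment (wR k) 3 / moment (wR k) 2 ^+ 2)
        * (wL k (u k))^-1 * (1 + ee.1)
      + ee.2 * (pxy (wL k) (wR k) (u k) (u1 k) * pxy (wL k) (wR k) (u k) (u2 k)).
  move=> k.
  have [e1 [e2 h]] := @perk _ _ _ _ _ _ _ _ (hL k) (hR k) (hA k) (hdist k).
  by exists (e1, e2).
have [f Hf] := boolp.choice H.
exists (fun k => (f k).1), (fun k => (f k).2); split; [|split].
- apply/cvgr0Pnorm_lt => e e0; have [N' HN'] := Hs e e0.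
  exists N' => // k /= hk; case: (Hf k) => h1 _.
  exact: le_lt_trans h1 (HN' k hk).
- apply/cvgr0Pnorm_lt => e e0; have [N' HN'] := Hs e e0.
  exists N' => // k /= hk; case: (Hf k) => _ [h1 _].
  exact: le_lt_trans h1 (HN' k hk).
- by move=> k; case: (Hf k) => _ [_ ->].
Qed.
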